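(* Consider the following model. Constants $\alpha,\beta\in[0,1]$ satisfy $0<\alpha+\beta\le 1$ and $\alpha\ge\beta$; let $\eta=\frac{\alpha}{1-\beta}$. An agent has innate opinion $x_0\in[-1,1]$, and at every time $k=0,1,2,\dots$ the platform recommends the same content $u_k=u_0\in[-1,1]$. The agent chooses $\mathrm{clk}_k\in\{0,1\}$, and its opinion evolves by $$x_{k}=\begin{cases}\alpha x_0+\beta x_{k-1}+(1-\alpha-\beta)u_{k-1}, & \mathrm{clk}_{k-1}=1,\\ \frac{\alpha}{\alpha+\beta}x_0+\frac{\beta}{\alpha+\beta}x_{k-1}, & \mathrm{clk}_{k-1}=0.\end{cases}$$ Time is divided into consecutive blocks of length $s\in\mathbb{N}$, $s\ge1$, block $i\ge0$ consisting of times $is,\dots,is+s-1$; in block $i$ the agent clicks at times $is,\dots,is+T_i-1$ and does not click at the remaining times of the block. Let $T_0=s$, and let $x_i^{(p)}:=x_{is}$ be the opinion at the beginning of block $i$ under policy $p$, where: - policy 1 (fixed): $T_i=T_0$ for all $i$; - policy 2 (decreasing): given $\kappa>1$, $T_{i+1}=\lfloor T_i/\kappa\rfloor$; - policy 3 (adaptive decreasing): given an integer $\tau\ge1$ and $x_{\text{drift}}>0$, $T_{i+1}=\max\{0,T_i-\tau\}$ if $|x_{(i+1)s}-x_0|\ge x_{\text{drift}}$, and $T_{i+1}=T_i$ otherwise. Then: (a) $\lim_{i\to\infty}x_i^{(1)}=\eta x_0+(1-\eta)u_0$; (b) $\lim_{i\to\infty}x_i^{(2)}=x_0$; (c) if $x_0<u_0$,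 then $x_0\le\lim_{i\to\infty}x_i^{(3)}\le\min\{1,x_0+x_{\text{drift}}\}$; otherwise $\max\{-1,x_0-x_{\text{drift}}\}\le\lim_{i\to\infty}x_i^{(3)}\le x_0$.
   Context: The model describes an agent interacting with a recommendation platform that always recommends the same content $u_0$; $\mathrm{clk}_k=1$ means the agent consumes the recommended content at time $k$. *)

(* Defs.v *)
From Stdlib Require Import Reals Lra Lia ZArith Arith.
Open Scope R_scope.

(* One step of the opinion dynamics: [c] = clk_{k-1}, [x] = x_{k-1}. *)
Definition step (alpha beta x0 u0 : R) (c : bool) (x : R) : R :=
  if c then alpha * x0 + beta * x + (1 - alpha - beta) * u0
  else alpha / (alpha + beta) * x0 + beta / (alpha + beta) * x.

Fixpoint opinion (alpha beta x0 u0 : R) (clk : nat -> bool) (k : nat) : R :=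
  match k with
  | O => x0
  | S k' => step alpha beta x0 u0 (clk k') (opinion alpha beta x0 u0 clk k')
  end.

Definition clicks (s : nat) (T : nat -> nat) (k : nat) : bool :=
  Nat.ltb (k mod s)%nat (T (k / s)%nat).

Fixpoint T_dec (kappa : R) (s : nat) (i : nat) : nat :=
  match i with
  | O => s
  | S i' => Z.to_nat (Int_part (INR (T_dec kappa s i') / kappa))
  end.

(* Main.v *)
Require Import Defs.
From Stdlib Require Import Reals Lra Lia ZArith Arith Classical.
Open Scope R_scope.

Definition pc (alpha beta : R) (c : bool) : R :=
  if c then beta else beta / (alpha + beta).
Definition qc (alpha beta x0 u0 : R) (c : bool) : R :=
  if c then alpha * x0 + (1 - alpha - beta) * u0 else alpha / (alpha + beta) * x0.

Lemma step_aff alpha beta x0 u0 c x :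
  step alpha beta x0 u0 c x = pc alpha beta c * x + qc alpha beta x0 u0 c.
Proof. destruct c; unfold step, pc, qc; simpl; ring. Qed.

Fixpoint gA (alpha beta : R) (t j : nat) : R :=
  match j with O => 1 | S j' => pc alpha beta (Nat.ltb j' t) * gA alpha beta t j' end.
Fixpoint gB (alpha beta x0 u0 : R) (t j : nat) : R :=
  match j with O => 0 | S j' => pc alpha beta (Nat.ltb j' t) * gB alpha beta x0 u0 t j'
     + qc alpha beta x0 u0 (Nat.ltb j' t) end.

Lemma block alpha beta x0 u0 s T i j : (1 <= s)%nat -> (j <= s)%nat ->
  opinion alpha beta x0 u0 (clicks s T) (i * s + j) =
  gA alpha beta (T i) j * opinion alpha beta x0 u0 (clicks s T) (i * s)
  + gB alpha beta x0 u0 (T i) j.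
Proof.
  intros Hs. induction j as [|j IH]; intros Hj.
  - rewrite Nat.add_0_r; simpl; ring.
  - replace (i * s + S j)%nat with (S (i * s + j)) by lia. simpl opinion.
    assert (Hc : clicks s T (i * s + j) = Nat.ltb j (T i)).
    { unfold clicks. replace (i * s + j)%nat with (j + i * s)%nat by lia.
      rewrite Nat.div_add by lia. rewrite Nat.Div0.mod_add.
      rewrite Nat.mod_small by lia. rewrite Nat.div_small by lia. reflexivity. }
    rewrite Hc, step_aff, IH by lia. simpl. ring.
Qed.

Lemma block_S alpha beta x0 u0 s T i : (1 <= s)%nat ->
  opinion alpha beta x0 u0 (clicks s T) (S i * s) =
  gA alpha beta (T i) s * opinion alpha beta x0 u0 (clicks s T) (i * s)
  + gB alpha beta x0 u0 (T i) s.
Proof. intros Hs. rewrite Nat.mul_succ_l. apply block; lia. Qed.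

Lemma pc_bounds alpha beta c : 0 <= alpha -> 0 <= beta -> 0 < alpha + beta <= 1 ->
  beta <= alpha -> 0 <= pc alpha beta c <= 1/2.
Proof.
  intros. destruct c; unfold pc.
  - lra.
  - set (p := beta / (alpha + beta)).
    assert (Hp : p * (alpha + beta) = beta) by (unfold p; field; lra).
    split; nra.
Qed.

Lemma gA_bounds alpha beta t j : 0 <= alpha -> 0 <= beta -> 0 < alpha + beta <= 1 ->
  beta <= alpha -> 0 <= gA alpha beta t j <= 1 /\ ((1 <= j)%nat -> gA alpha beta t j <= 1/2).
Proof.
  intros. induction j as [|j [IH1 IH2]]; simpl.
  - split; [lra| intros; lia].
  - pose proof (pc_bounds alpha beta (Nat.ltb j t)) as P. split; [split; nra| intros; nra].
Qed.

Lemma fix_blk alpha beta x0 u0 s t L :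
  (forall j, (j < s)%nat -> pc alpha beta (Nat.ltb j t) * L + qc alpha beta x0 u0 (Nat.ltb j t) = L) ->
  forall j, (j <= s)%nat -> gA alpha beta t j * L + gB alpha beta x0 u0 t j = L.
Proof.
  intros H. induction j as [|j IH]; intros Hj; simpl.
  - ring.
  - transitivity (pc alpha beta (Nat.ltb j t) * (gA alpha beta t j * L + gB alpha beta x0 u0 t j)
       + qc alpha beta x0 u0 (Nat.ltb j t)); [ring|].
    rewrite IH by lia. apply H; lia.
Qed.

Lemma geo_cv (u : nat -> R) a b L N : 0 <= a <= 1/2 -> a * L + b = L ->
  (forall i, (N <= i)%nat -> u (S i) = a * u i + b) -> Un_cv u L.
Proof.
  intros Ha Hf Hu.
  assert (Hn : forall n, u (N + n)%nat - L = a ^ n * (u N - L)).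
  { induction n as [|n IH]. - rewrite Nat.add_0_r; simpl; ring.
    - replace (N + S n)%nat with (S (N + n)) by lia. rewrite Hu by lia. simpl.
      transitivity (a * (u (N + n)%nat - L) + (a * L + b - L)); [ring|].
      rewrite IH, Hf. ring. }
  intros eps Heps.
  assert (Hd : 0 < eps / (Rabs (u N - L) + 1)).
  { apply Rdiv_lt_0_compat; [lra|]. pose proof (Rabs_pos (u N - L)); lra. }
  destruct (pow_lt_1_zero a) with (y := eps / (Rabs (u N - L) + 1)) as [M HM].
  { rewrite Rabs_right; lra. } { exact Hd. }
  exists (N + M)%nat. intros n Hnm. unfold R_dist.
  replace n with (N + (n - N))%nat by lia. rewrite Hn, Rabs_mult.
  specialize (HM (n - N)%nat ltac:(lia)).
  pose proof (Rabs_pos (u N - L)).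
  set (r := Rabs (u N - L)) in *. set (q := Rabs (a ^ (n - N))) in *.
  assert (Hq : q * (r + 1) < eps).
  { apply (Rmult_lt_compat_r (r + 1)) in HM; [|lra].
    replace (eps / (r + 1) * (r + 1)) with eps in HM by (field; lra). exact HM. }
  assert (0 <= q) by apply Rabs_pos. nra.
Qed.

Lemma lim_bounds (u : nat -> R) L lo hi N : Un_cv u L ->
  (forall i, (N <= i)%nat -> lo <= u i <= hi) -> lo <= L <= hi.
Proof.
  intros Hc Hb. split.
  - destruct (Rle_dec lo L) as [|Hn]; [auto|]. exfalso.
    destruct (Hc (lo - L)) as [M HM]; [lra|].
    specialize (HM (N + M)%nat ltac:(lia)). specialize (Hb (N + M)%nat ltac:(lia)).
    unfold R_dist in HM. apply Rabs_def2 in HM. lra.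
  - destruct (Rle_dec L hi) as [|Hn]; [auto|]. exfalso.
    destruct (Hc (L - hi)) as [M HM]; [lra|].
    specialize (HM (N + M)%nat ltac:(lia)). specialize (Hb (N + M)%nat ltac:(lia)).
    unfold R_dist in HM. apply Rabs_def2 in HM. lra.
Qed.

Lemma nonincr_stab : forall m (f : nat -> nat), (f 0 <= m)%nat ->
  (forall i, (f (S i) <= f i)%nat) -> exists N, forall i, (N <= i)%nat -> f i = f N.
Proof.
  assert (Hmono : forall f : nat -> nat, (forall i, (f (S i) <= f i)%nat) ->
     forall i j, (i <= j)%nat -> (f j <= f i)%nat).
  { intros f Hf i j Hij. induction Hij; [lia|]. specialize (Hf m). lia. }
  induction m as [|m IH]; intros f H0 Hf.
  - exists 0%nat. intros i _. pose proof (Hmono f Hf 0%nat i ltac:(lia)). lia.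
  - destruct (classic (forall i, f i = f 0%nat)) as [Hall|Hn].
    + exists 0%nat. intros; auto.
    + apply not_all_ex_not in Hn. destruct Hn as [i Hi].
      pose proof (Hmono f Hf 0%nat i ltac:(lia)).
      destruct (IH (fun k => f (i + k)%nat)) as [N HN].
      * cbv beta. rewrite Nat.add_0_r. lia.
      * intros k. replace (i + S k)%nat with (S (i + k)) by lia. apply Hf.
      * exists (i + N)%nat. intros j Hj. replace j with (i + (j - i))%nat by lia.
        apply (HN (j - i)%nat). lia.
Qed.

Lemma invariant alpha beta x0 u0 clk k : 0 <= alpha -> 0 <= beta -> 0 < alpha + beta <= 1 ->
  (x0 <= u0 -> x0 <= opinion alpha beta x0 u0 clk k <= u0) /\
  (u0 <= x0 -> u0 <= opinion alpha beta x0 u0 clk k <= x0).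
Proof.
  intros Ha Hb Hab. induction k as [|k [IH1 IH2]]; simpl.
  - split; intros; lra.
  - set (x := opinion alpha beta x0 u0 clk k) in *.
    destruct (clk k); unfold step.
    + split; intros Hxu; [specialize (IH1 Hxu)|specialize (IH2 Hxu)]; split; nra.
    + set (p := beta / (alpha + beta)).
      assert (Hp : p * (alpha + beta) = beta) by (unfold p; field; lra).
      assert (Hq : alpha / (alpha + beta) = 1 - p) by (unfold p; field; lra).
      rewrite Hq. assert (Hp01 : 0 <= p <= 1) by (split; nra).
      split; intros Hxu; [specialize (IH1 Hxu)|specialize (IH2 Hxu)]; split; nra.
Qed.

Lemma floor_div_le kappa n : 1 < kappa ->
  (Z.to_nat (Int_part (INR n / kappa)) <= n - 1)%nat.
Proof.
  intros Hk. destruct (base_Int_part (INR n / kappa)) as [H1 _].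
  set (z := Int_part (INR n / kappa)) in *.
  destruct (Z_le_gt_dec z 0) as [Hz|Hz].
  - destruct z; simpl; lia.
  - set (r := INR n / kappa) in *.
    assert (Hr : r * kappa = INR n) by (unfold r; field; lra).
    assert (Hz1 : 1 <= IZR z) by (apply IZR_le; lia).
    assert (Hlt : IZR z < INR n) by nra.
    rewrite INR_IZR_INZ in Hlt. apply lt_IZR in Hlt. lia.
Qed.

Lemma T_dec_le kappa s i : 1 < kappa -> (T_dec kappa s i <= s - i)%nat.
Proof.
  intros Hk. induction i as [|i IH]; simpl.
  - lia.
  - pose proof (floor_div_le kappa (T_dec kappa s i) Hk). lia.
Qed.

Theorem corollary1 (alpha beta x0 u0 : R) (s : nat)
  (ha0 : 0 <= alpha <= 1) (hb0 : 0 <= beta <= 1)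
  (hab : 0 < alpha + beta <= 1) (hge : beta <= alpha)
  (hx0 : -1 <= x0 <= 1) (hu0 : -1 <= u0 <= 1) (hs : (1 <= s)%nat) :
  let eta := alpha / (1 - beta) in
  (* (a) fixed policy *)
  Un_cv (fun i => opinion alpha beta x0 u0 (clicks s (fun _ => s)) (i * s))
        (eta * x0 + (1 - eta) * u0)
  /\
  (* (b) decreasing policy *)
  (forall kappa : R, 1 < kappa ->
     Un_cv (fun i => opinion alpha beta x0 u0 (clicks s (T_dec kappa s)) (i * s)) x0)
  /\
  (* (c) adaptive decreasing policy *)
  (forall (tau : nat) (xdrift : R), (1 <= tau)%nat -> 0 < xdrift ->
     forall T : nat -> nat,
       T O = s ->
       (forall i : nat,
          T (S i) =
            if Rle_dec xdrift
                 (Rabs (opinion alpha beta x0 u0 (clicks s T) (S i * s) - x0))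
            then (T i - tau)%nat
            else T i) ->
       exists L : R,
         Un_cv (fun i => opinion alpha beta x0 u0 (clicks s T) (i * s)) L /\
         (if Rlt_dec x0 u0
          then x0 <= L <= Rmin 1 (x0 + xdrift)
          else Rmax (-1) (x0 - xdrift) <= L <= x0)).
Proof.
  intros eta.
  assert (Ha : 0 <= alpha) by lra. assert (Hb : 0 <= beta) by lra.
  assert (HA : forall t, 0 <= gA alpha beta t s <= 1/2).
  { intros t. destruct (gA_bounds alpha beta t s Ha Hb hab hge) as [[H1 _] H2].
    split; [lra| apply H2; lia]. }
  assert (Hfix0 : gA alpha beta 0 s * x0 + gB alpha beta x0 u0 0 s = x0).
  { apply fix_blk with (s := s); [|lia]. intros j _.
    replace (Nat.ltb j 0) with false by (symmetry; apply Nat.ltb_ge; lia).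
    unfold pc, qc. field. lra. }
  split; [|split].
  - apply geo_cv with (a := gA alpha beta s s) (b := gB alpha beta x0 u0 s s) (N := 0%nat).
    + apply HA.
    + apply fix_blk with (s := s); [|lia]. intros j Hj.
      replace (Nat.ltb j s) with true by (symmetry; apply Nat.ltb_lt; lia).
      unfold pc, qc, eta. field. lra.
    + intros i _. apply (block_S alpha beta x0 u0 s (fun _ => s) i hs).
  - intros kappa Hk.
    apply geo_cv with (a := gA alpha beta 0 s) (b := gB alpha beta x0 u0 0 s) (N := s).
    + apply HA.
    + exact Hfix0.
    + intros i Hi. rewrite (block_S alpha beta x0 u0 s (T_dec kappa s) i hs).
      pose proof (T_dec_le kappa s i Hk).
      replace (T_dec kappa s i) with 0%nat by lia. reflexivity.
  - intros tau xdrift Htau Hxd T HT0 HT.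
    set (u := fun i => opinion alpha beta x0 u0 (clicks s T) (i * s)).
    assert (Hnon : forall i, (T (S i) <= T i)%nat).
    { intros i. rewrite HT. destruct (Rle_dec _ _); lia. }
    destruct (nonincr_stab (T 0%nat) T (le_n _) Hnon) as [N HN].
    set (t := T N) in *.
    assert (Hrec : forall i, (N <= i)%nat -> u (S i) =
        gA alpha beta t s * u i + gB alpha beta x0 u0 t s).
    { intros i Hi. unfold u. rewrite (block_S alpha beta x0 u0 s T i hs). rewrite HN by lia.
      reflexivity. }
    assert (Hinv : forall i, (x0 <= u0 -> x0 <= u i <= u0) /\ (u0 <= x0 -> u0 <= u i <= x0)).
    { intros i. apply invariant; lra. }
    destruct (Nat.eq_dec t 0) as [Ht0|Ht0].
    + exists x0. split.
      * apply geo_cv with (a := gA alpha beta t s) (b := gB alpha beta x0 u0 t s) (N := N).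
        -- apply HA.
        -- rewrite Ht0. exact Hfix0.
        -- exact Hrec.
      * destruct (Rlt_dec x0 u0).
        -- split; [lra|]. apply Rmin_glb; lra.
        -- split; [|lra]. apply Rmax_lub; lra.
    + set (a := gA alpha beta t s). set (b := gB alpha beta x0 u0 t s).
      assert (HAa : 0 <= a <= 1/2) by apply HA.
      exists (b / (1 - a)).
      assert (Hcv : Un_cv u (b / (1 - a))).
      { apply geo_cv with (a := a) (b := b) (N := N); [exact HAa| field; lra | exact Hrec]. }
      split; [exact Hcv|].
      assert (Hdr : forall i, (S N <= i)%nat -> x0 - xdrift <= u i <= x0 + xdrift).
      { intros i Hi. destruct i as [|i]; [lia|].
        pose proof (HT i) as Hi'. rewrite (HN (S i)) in Hi' by lia. rewrite (HN i) in Hi' by lia.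
        destruct (Rle_dec xdrift _) as [Hle|Hlt].
        - fold t in Hi'. lia.
        - apply Rnot_le_lt in Hlt. apply Rabs_def2 in Hlt. unfold u. lra. }
      destruct (Rlt_dec x0 u0) as [Hl|Hl].
      * destruct (lim_bounds u _ x0 (Rmin (x0 + xdrift) u0) (S N) Hcv) as [H1 H2].
        { intros i Hi. specialize (Hdr i Hi). destruct (Hinv i) as [Hi1 _].
          specialize (Hi1 ltac:(lra)). split; [lra|]. apply Rmin_glb; lra. }
        split; [lra|]. apply Rmin_glb.
        -- pose proof (Rmin_r (x0 + xdrift) u0). lra.
        -- pose proof (Rmin_l (x0 + xdrift) u0). lra.
      * destruct (lim_bounds u _ (Rmax (x0 - xdrift) u0) x0 (S N) Hcv) as [H1 H2].
        { intros i Hi. specialize (Hdr i Hi). destruct (Hinv i) as [_ Hi2].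
          specialize (Hi2 ltac:(lra)). split; [|lra]. apply Rmax_lub; lra. }
        split; [|lra]. apply Rmax_lub.
        -- pose proof (Rmax_r (x0 - xdrift) u0). lra.
        -- pose proof (Rmax_l (x0 - xdrift) u0). lra.
Qed.
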